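(* Let $0<q<1$. For every complex number $z$, $$|A_q(z)|\le e^{q|z|/(1-q)},$$ and for every complex number $z\neq 0$, $$|A_q(z)|\le \frac{\left(\frac{|z|}{\sqrt q}\right)^{1/2}\exp\left\{-\frac{\log^2|z|}{4\log q}\right\}}{(q;q)_\infty}.$$
   Context: Notation: $(a;q)_0:=1$, $(a;q)_k:=\prod_{j=0}^{k-1}(1-aq^j)$, $(a;q)_\infty:=\prod_{j=0}^{\infty}(1-aq^j)$. Ramanujan's function is the entire function $A_q(z):=\sum_{k=0}^{\infty}\frac{q^{k^2}}{(q;q)_k}(-z)^k$. Logarithms and powers are principal branches (here only applied to positive reals). *)

(* Defs.v *)
From Stdlib Require Import Reals.
From Coquelicot Require Import Coquelicot.
Open Scope R_scope.

Fixpoint qpoch (a q : R) (k : nat) : R :=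
  match k with
  | O => 1
  | S k' => qpoch a q k' * (1 - a * q ^ k')
  end.

Definition qpoch_inf (a q : R) : R := Lim_seq (fun k => qpoch a q k).

Definition A_term (q : R) (z : C) (k : nat) : C :=
  Cmult (RtoC (q ^ (k * k) / qpoch q q k)) (Cpow (Copp z) k).

(* A_q(z) = sum_k A_term; the complex series is summed componentwise
   (real and imaginary parts), which is its sum whenever it converges. *)
Definition A_q (q : R) (z : C) : C :=
  (Series (fun k => Re (A_term q z k)), Series (fun k => Im (A_term q z k))).

(* Main.v *)
Require Import Defs.
From Stdlib Require Import Reals Lra Psatz.
From Coquelicot Require Import Coquelicot.
Open Scope R_scope.

Lemma partial_Cmod (t : nat -> C) N :
  Cmod (sum_f_R0 (fun k => Re (t k)) N, sum_f_R0 (fun k => Im (t k)) N)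
  <= sum_f_R0 (fun k => Cmod (t k)) N.
Proof.
induction N as [|N IH]; simpl.
- destruct (t 0%nat) as [a b]; simpl. right; reflexivity.
- eapply Rle_trans; [|apply Rplus_le_compat_r; exact IH].
  replace (sum_f_R0 (fun k => Re (t k)) N + Re (t (S N)),
     sum_f_R0 (fun k => Im (t k)) N + Im (t (S N))) with
    (Cplus (sum_f_R0 (fun k => Re (t k)) N, sum_f_R0 (fun k => Im (t k)) N) (t (S N))).
  + apply Cmod_triangle.
  + destruct (t (S N)); reflexivity.
Qed.

Lemma im_le_Cmod (c : C) : Rabs (Im c) <= Cmod c.
Proof.
pose proof (Cmod2_alt c). pose proof (Cmod_ge_0 c).
rewrite <- (Rabs_pos_eq (Cmod c)) by lra. apply Rsqr_le_abs_0.
unfold Rsqr. nra.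
Qed.

Lemma Cmod_series_bound (t : nat -> C) B :
  (forall N, sum_f_R0 (fun k => Cmod (t k)) N <= B) ->
  Cmod (Series (fun k => Re (t k)), Series (fun k => Im (t k))) <= B.
Proof.
intros HB.
assert (Hc : ex_series (fun k => Cmod (t k))).
{ destruct (ex_finite_lim_seq_incr (sum_n (fun k => Cmod (t k))) B) as [l Hl].
  - intros n. rewrite sum_Sn. unfold plus; simpl. pose proof (Cmod_ge_0 (t (S n))). lra.
  - intros n. rewrite sum_n_Reals. apply HB.
  - exists l. exact Hl. }
assert (Hre : ex_series (fun k => Re (t k))).
{ apply (@ex_series_le R_AbsRing R_CompleteNormedModule _ (fun k => Cmod (t k))); [|exact Hc].
  intros n. apply re_le_Cmod. }
assert (Him : ex_series (fun k => Im (t k))).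
{ apply (@ex_series_le R_AbsRing R_CompleteNormedModule _ (fun k => Cmod (t k))); [|exact Hc].
  intros n. apply (im_le_Cmod (t n)). }
pose proof (Series_correct _ Hre) as Sre.
pose proof (Series_correct _ Him) as Sim.
set (a := Series (fun k => Re (t k))) in *.
set (b := Series (fun k => Im (t k))) in *.
assert (Hl : is_lim_seq (fun N => sum_n (fun k => Re (t k)) N ^ 2 + sum_n (fun k => Im (t k)) N ^ 2) (a ^ 2 + b ^ 2)).
{ apply (is_lim_seq_plus' _ _ (a^2) (b^2)).
  - replace (a^2) with (a*(a*1)) by ring.
    apply is_lim_seq_mult'; [exact Sre|]. apply is_lim_seq_mult'; [exact Sre|apply is_lim_seq_const].
  - replace (b^2) with (b*(b*1)) by ring.
    apply is_lim_seq_mult'; [exact Sim|]. apply is_lim_seq_mult'; [exact Sim|apply is_lim_seq_const]. }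
assert (Hle : Rbar_le (a ^ 2 + b ^ 2) (B ^ 2)).
{ refine (is_lim_seq_le _ (fun _ => B ^ 2) _ _ _ Hl (is_lim_seq_const _)).
  intros N. rewrite !sum_n_Reals.
  pose proof (partial_Cmod t N) as H. pose proof (HB N) as H2.
  pose proof (Cmod2_alt (sum_f_R0 (fun k => Re (t k)) N, sum_f_R0 (fun k => Im (t k)) N)) as E.
  simpl Re in E. simpl Im in E.
  pose proof (Cmod_ge_0 (sum_f_R0 (fun k => Re (t k)) N, sum_f_R0 (fun k => Im (t k)) N)).
  nra. }
simpl in Hle.
assert (HB0 : 0 <= B).
{ eapply Rle_trans; [|apply (HB 0%nat)]. simpl. apply Cmod_ge_0. }
pose proof (Cmod2_alt (a, b)) as E. simpl in E.
pose proof (Cmod_ge_0 (a, b)). nra.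
Qed.

Lemma exp_le' a b : a <= b -> exp a <= exp b.
Proof. intros [H|H]; [left; apply exp_increasing; exact H| right; subst; reflexivity]. Qed.

Lemma pow_q_bounds q k : 0 < q < 1 -> 0 < q ^ k <= 1.
Proof.
intros Hq. split. apply pow_lt; lra.
induction k; simpl; [lra|]. nra.
Qed.

Lemma qpoch_pos q k : 0 < q < 1 -> 0 < qpoch q q k.
Proof.
intros Hq. induction k; simpl; [lra|].
pose proof (pow_q_bounds q k Hq). apply Rmult_lt_0_compat; nra.
Qed.

Lemma qpoch_decr q n d : 0 < q < 1 -> qpoch q q (n + d) <= qpoch q q n.
Proof.
intros Hq. induction d.
- rewrite Nat.add_0_r; lra.
- rewrite Nat.add_succ_r. simpl.
  pose proof (pow_q_bounds q (n+d) Hq). pose proof (qpoch_pos q (n+d) Hq).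
  assert (0 <= qpoch q q (n + d) * (q * q ^ (n + d))) by (apply Rmult_le_pos; nra).
  lra.
Qed.

Lemma qpoch_weier q J n : 0 < q < 1 ->
  qpoch q q J * (1 - q ^ (J+1) * (1 - q ^ n) / (1 - q)) <= qpoch q q (J + n).
Proof.
intros Hq. induction n.
- rewrite Nat.add_0_r. simpl. right; field. lra.
- replace (J + S n)%nat with (S (J + n)) by lia. simpl qpoch.
  pose proof (pow_q_bounds q (J+n) Hq) as [H1 H2].
  pose proof (qpoch_pos q J Hq).
  pose proof (pow_q_bounds q n Hq) as [H3 H4].
  set (P := qpoch q q (J+n)) in *.
  set (Sg := q ^ (J+1) * (1 - q ^ n) / (1 - q)).
  assert (HS : 0 <= Sg).
  { unfold Sg. apply Rmult_le_pos; [apply Rmult_le_pos|].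
    - left; apply pow_lt; lra.
    - lra.
    - left; apply Rinv_0_lt_compat; lra. }
  assert (E : q ^ (J+1) * (1 - q ^ S n) / (1 - q) = Sg + q * q ^ (J + n)).
  { unfold Sg. rewrite !pow_add. simpl. field. lra. }
  rewrite E.
  assert (Ha : 0 <= 1 - q * q ^ (J+n)) by nra.
  apply Rle_trans with (qpoch q q J * (1 - Sg) * (1 - q * q ^ (J + n))).
  + assert (0 <= qpoch q q J * Sg * (q * q ^ (J + n))).
    { apply Rmult_le_pos; [apply Rmult_le_pos; [lra|exact HS]|nra]. }
    nra.
  + apply Rmult_le_compat_r; assumption.
Qed.

Lemma qpoch_inf_props q : 0 < q < 1 ->
  0 < qpoch_inf q q /\ forall N, qpoch_inf q q <= qpoch q q N.
Proof.
intros Hq.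
destruct (pow_lt_1_zero q ltac:(rewrite Rabs_pos_eq; lra) ((1-q)/2) ltac:(lra)) as [J HJ].
specialize (HJ J (le_n J)). rewrite Rabs_pos_eq in HJ by (left; apply pow_lt; lra).
set (c := qpoch q q J / 2).
assert (Hc : 0 < c) by (unfold c; pose proof (qpoch_pos q J Hq); lra).
assert (Hlow : forall N, c <= qpoch q q N).
{ intros N. destruct (Nat.le_gt_cases J N) as [HN|HN].
  - replace N with (J + (N - J))%nat by lia.
    eapply Rle_trans; [|apply qpoch_weier; exact Hq].
    unfold c. pose proof (qpoch_pos q J Hq).
    pose proof (pow_q_bounds q (N-J) Hq).
    assert (q ^ (J+1) * (1 - q ^ (N - J)) / (1 - q) <= 1/2).
    { rewrite pow_add. simpl.
      assert (HX : q ^ J * (q * 1) * (1 - q ^ (N - J)) <= (1 - q) / 2).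
      { pose proof (pow_q_bounds q J Hq).
        assert (HH : 0 <= (q * 1) * (1 - q ^ (N - J)) <= 1) by (split; nra).
        rewrite Rmult_assoc.
        apply Rle_trans with (q ^ J * 1); [|lra].
        apply Rmult_le_compat_l; lra. }
      replace (1/2) with ((1-q)/2/(1-q)) by (field; lra).
      unfold Rdiv. apply Rmult_le_compat_r; [left; apply Rinv_0_lt_compat; lra|].
      exact HX. }
    nra.
  - apply Rle_trans with (qpoch q q J).
    + unfold c. pose proof (qpoch_pos q J Hq). lra.
    + replace J with (N + (J - N))%nat by lia. apply qpoch_decr; exact Hq. }
assert (Hdec : forall n, qpoch q q (S n) <= qpoch q q n).
{ intros n. rewrite <- Nat.add_1_r. apply qpoch_decr; exact Hq. }
destruct (ex_finite_lim_seq_decr (fun k => qpoch q q k) c Hdec Hlow) as [l Hl].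
unfold qpoch_inf. rewrite (is_lim_seq_unique _ _ Hl). simpl.
split.
- pose proof (is_lim_seq_le (fun _ => c) _ c l Hlow (is_lim_seq_const c) Hl) as H.
  simpl in H. lra.
- intros N. apply (is_lim_seq_decr_compare _ l Hl Hdec).
Qed.

Lemma sum_qpoch q N : 0 < q < 1 ->
  sum_f_R0 (fun k => q ^ k / qpoch q q k) N = / qpoch q q N.
Proof.
intros Hq. induction N; simpl.
- field.
- rewrite IHN. pose proof (qpoch_pos q N Hq). pose proof (qpoch_pos q (S N) Hq) as H2.
  simpl in H2. field. split; [|lra]. intro E. rewrite E in H2. lra.
Qed.

Lemma sum_exp_le x N : 0 <= x -> sum_f_R0 (fun k => x ^ k / INR (Factorial.fact k)) N <= exp x.
Proof.
intros Hx.
assert (H : exp_in x (exp x)).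
{ unfold exp. destruct (exist_exp x) as [l Hl]. exact Hl. }
replace (sum_f_R0 (fun k => x ^ k / INR (Factorial.fact k)) N) with
  (sum_f_R0 (fun i => / INR (Factorial.fact i) * x ^ i) N).
- apply (growing_ineq (sum_f_R0 (fun i => / INR (Factorial.fact i) * x ^ i))).
  + intros n. rewrite tech5. assert (0 <= / INR (Factorial.fact (S n)) * x ^ S n); [|lra].
    apply Rmult_le_pos; [left; apply Rinv_0_lt_compat, lt_0_INR, Factorial.lt_O_fact|apply pow_le; exact Hx].
  + exact H.
- apply sum_eq. intros i _. unfold Rdiv. ring.
Qed.

Lemma term_Cmod q z k : 0 < q < 1 ->
  Cmod (A_term q z k) = q ^ (k * k) / qpoch q q k * Cmod z ^ k.
Proof.
intros Hq. unfold A_term. rewrite Cmod_mult, Cmod_R, Cmod_pow, Cmod_opp.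
rewrite Rabs_pos_eq; [reflexivity|].
pose proof (qpoch_pos q k Hq). pose proof (pow_q_bounds q (k*k) Hq).
unfold Rdiv. apply Rmult_le_pos; [lra|left; apply Rinv_0_lt_compat; lra].
Qed.

Lemma aux1 q k : 0 < q < 1 -> (INR k + 1) * (1 - q) * q ^ k <= 1 - q ^ (S k).
Proof.
intros Hq. induction k.
- simpl. lra.
- rewrite S_INR. cbn [pow] in *.
  pose proof (pow_q_bounds q k Hq). pose proof (pos_INR k).
  assert (Ht : 0 <= (INR k + 1) * (1 - q) * q ^ k) by (apply Rmult_le_pos; nra).
  assert (Ht2 : (INR k + 1) * (1 - q) * q ^ k * q <= (INR k + 1) * (1 - q) * q ^ k) by nra.
  nra.
Qed.

Lemma bound1 q k : 0 < q < 1 ->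
  q ^ (k * k) * (1 - q) ^ k * INR (Factorial.fact k) <= q ^ k * qpoch q q k.
Proof.
intros Hq. induction k.
- simpl. lra.
- assert (E1 : q ^ (S k * S k) = q ^ (k * k) * (q ^ k * q ^ k * q)).
  { replace (S k * S k)%nat with (k * k + (k + k + 1))%nat by lia.
    rewrite !pow_add. simpl. ring. }
  rewrite E1, fact_simpl, mult_INR, S_INR. cbn [pow qpoch].
  pose proof (pow_q_bounds q k Hq). pose proof (aux1 q k Hq) as Ha. cbn [pow] in Ha.
  pose proof (qpoch_pos q k Hq).
  set (A := q ^ (k * k) * (1 - q) ^ k * INR (Factorial.fact k)) in *.
  set (B := q ^ k * qpoch q q k) in *.
  assert (HA : 0 <= A).
  { unfold A. apply Rmult_le_pos; [apply Rmult_le_pos|].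
    - apply pow_le; lra.
    - apply pow_le; lra.
    - apply pos_INR. }
  set (X := q ^ k * q ^ k * q * (1 - q) * (INR k + 1)).
  set (Y := q * (1 - q * q ^ k)).
  assert (HX : 0 <= X) by (unfold X; pose proof (pos_INR k);
    apply Rmult_le_pos; [apply Rmult_le_pos|]; nra).
  assert (HXY : X <= Y).
  { unfold X, Y. pose proof (pos_INR k).
    assert (Ht : 0 <= (INR k + 1) * (1 - q) * q ^ k) by (apply Rmult_le_pos; [nra|lra]).
    replace (q ^ k * q ^ k * q * (1 - q) * (INR k + 1)) with (q * q ^ k * ((INR k + 1) * (1 - q) * q ^ k)) by ring.
    assert (q * q ^ k * ((INR k + 1) * (1 - q) * q ^ k) <= q * ((INR k + 1) * (1 - q) * q ^ k)) by (apply Rmult_le_compat_r; nra).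
    nra. }
  assert (HB : 0 <= B) by (unfold B; apply Rmult_le_pos; lra).
  replace (q ^ (k * k) * (q ^ k * q ^ k * q) * ((1 - q) * (1 - q) ^ k) * ((INR k + 1) * INR (Factorial.fact k))) with (A * X) by (unfold A, X; ring).
  replace (q * q ^ k * (qpoch q q k * (1 - q * q ^ k))) with (B * Y) by (unfold B, Y; ring).
  apply Rle_trans with (B * X).
  + apply Rmult_le_compat_r; assumption.
  + apply Rmult_le_compat_l; assumption.
Qed.

Lemma sqrt_exp a : sqrt (exp a) = exp (a / 2).
Proof.
replace (exp a) with (exp (a/2) * exp (a/2)).
- apply sqrt_square. left; apply exp_pos.
- rewrite <- exp_plus. f_equal. field.
Qed.

Lemma pow_exp x n : 0 < x -> x ^ n = exp (INR n * ln x).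
Proof. intros Hx. rewrite <- ln_pow by exact Hx. rewrite exp_ln; [reflexivity|apply pow_lt; exact Hx]. Qed.

Lemma key2 q r k : 0 < q < 1 -> 0 < r ->
  q ^ (k * k) * r ^ k <= q ^ k * (sqrt (r / sqrt q) * exp (- (ln r ^ 2) / (4 * ln q))).
Proof.
intros Hq Hr.
assert (HL : ln q < 0) by (rewrite <- ln_1; apply ln_increasing; lra).
set (L := ln q) in *. set (lr := ln r).
assert (Hsq : sqrt q = exp (L / 2)) by (unfold L; rewrite <- sqrt_exp, exp_ln; lra).
assert (Hd : r / sqrt q = exp (lr - L / 2)).
{ rewrite Hsq. unfold lr. unfold Rminus. rewrite exp_plus, exp_Ropp, exp_ln by lra. reflexivity. }
rewrite Hd, sqrt_exp, (pow_exp q), (pow_exp r), (pow_exp q) by lra.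
fold L. fold lr.
rewrite <- !exp_plus. apply exp_le'.
rewrite mult_INR. set (K := INR k).
set (w := - (lr ^ 2) / (4 * L)).
assert (Hw : 4 * L * w = - (lr ^ 2)) by (unfold w; field; lra).
assert (Hsq2 : 0 <= (2 * L * K - L + lr) ^ 2) by (apply pow2_ge_0).
set (P := K * K * L + K * lr - (K * L + ((lr - L / 2) / 2 + w))).
assert (HP : 4 * L * P = (2 * L * K - L + lr) ^ 2).
{ unfold P. replace (4 * L * (K * K * L + K * lr - (K * L + ((lr - L / 2) / 2 + w))))
   with (4 * L * (K * K * L + K * lr - (K * L + ((lr - L / 2) / 2))) - 4 * L * w) by field.
  rewrite Hw. field. }
assert (P <= 0) by nra.
unfold P in *. lra.
Qed.

Theorem mainTheorem3 (q : R) (hq0 : 0 < q) (hq1 : q < 1) :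
  (forall z : C, Cmod (A_q q z) <= exp (q * Cmod z / (1 - q))) /\
  (forall z : C, z <> 0%C ->
     Cmod (A_q q z) <=
       sqrt (Cmod z / sqrt q)
       * exp (- (ln (Cmod z) ^ 2) / (4 * ln q))
       / qpoch_inf q q).
Proof.
assert (Hq : 0 < q < 1) by lra.
split.
- intros z. unfold A_q. apply Cmod_series_bound. intros N.
  set (r := Cmod z). assert (Hr : 0 <= r) by apply Cmod_ge_0.
  eapply Rle_trans; [|apply (sum_exp_le (q * r / (1 - q)))].
  2:{ apply Rmult_le_pos; [nra|left; apply Rinv_0_lt_compat; lra]. }
  apply sum_Rle. intros k _. rewrite term_Cmod by exact Hq. fold r.
  pose proof (bound1 q k Hq) as Hb.
  pose proof (qpoch_pos q k Hq) as HP.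
  pose proof (pow_q_bounds q k Hq) as Hqk.
  assert (HF : 0 < INR (Factorial.fact k)) by apply INR_fact_lt_0.
  assert (Hc : 0 < (1 - q) ^ k) by (apply pow_lt; lra).
  assert (E : (q * r / (1 - q)) ^ k / INR (Factorial.fact k)
     = q ^ k / ((1 - q) ^ k * INR (Factorial.fact k)) * r ^ k).
  { unfold Rdiv. rewrite !Rpow_mult_distr, pow_inv. field. lra. }
  rewrite E. apply Rmult_le_compat_r; [apply pow_le; exact Hr|].
  replace (q ^ (k * k) / qpoch q q k) with
    ((q ^ (k * k) * (1 - q) ^ k * INR (Factorial.fact k)) * / (qpoch q q k * ((1 - q) ^ k * INR (Factorial.fact k)))) by (field; lra).
  replace (q ^ k / ((1 - q) ^ k * INR (Factorial.fact k))) with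
    ((q ^ k * qpoch q q k) * / (qpoch q q k * ((1 - q) ^ k * INR (Factorial.fact k)))) by (field; lra).
  apply Rmult_le_compat_r; [|exact Hb].
  left; apply Rinv_0_lt_compat. apply Rmult_lt_0_compat; [lra|]. apply Rmult_lt_0_compat; lra.
- intros z Hz. unfold A_q. apply Cmod_series_bound. intros N.
  set (r := Cmod z). assert (Hr : 0 < r) by (apply Cmod_gt_0; exact Hz).
  set (M := sqrt (r / sqrt q) * exp (- (ln r ^ 2) / (4 * ln q))).
  assert (HM : 0 <= M).
  { unfold M. apply Rmult_le_pos; [apply sqrt_pos|left; apply exp_pos]. }
  destruct (qpoch_inf_props q Hq) as [Hi1 Hi2].
  apply Rle_trans with (sum_f_R0 (fun k => q ^ k / qpoch q q k) N * M).
  + rewrite Rmult_comm, scal_sum. apply sum_Rle. intros k _. rewrite term_Cmod by exact Hq. fold r.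
    pose proof (key2 q r k Hq Hr) as K. fold M in K.
    pose proof (qpoch_pos q k Hq) as HP.
    replace (q ^ (k * k) / qpoch q q k * r ^ k) with ((q ^ (k * k) * r ^ k) * / qpoch q q k) by (field; lra).
    replace (q ^ k / qpoch q q k * M) with ((q ^ k * M) * / qpoch q q k) by (field; lra).
    apply Rmult_le_compat_r; [left; apply Rinv_0_lt_compat; lra|exact K].
  + rewrite sum_qpoch by exact Hq.
    pose proof (Hi2 N). unfold Rdiv. rewrite Rmult_comm.
    apply Rmult_le_compat_l; [exact HM|]. apply Rinv_le_contravar; assumption.
Qed.
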